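(* Let $A$ be a unital $C^*$-algebra and let $p,q\in A$ be properly infinite, full projections with $p\sim q$ (Murray–von Neumann equivalent). Suppose there is a properly infinite, full projection $r\in A$ with $pr=0$ and $qr=0$. Then $p\sim_h q$, i.e. $p$ and $q$ are connected by a norm-continuous path of projections in $A$ (equivalently $q=upu^*$ for some $u\in\mathcal U^0(A)$).
   Context: A projection $p$ is properly infinite if there are mutually orthogonal subprojections $e,f\le p$ with $e\sim p\sim f$. A projection is full if it is not contained in any proper closed two-sided ideal. $\mathcal U^0(A)$ denotes the connected component of the identity in the unitary group of $A$. *)

(* Defs.v *)
From Stdlib Require Import Reals Lra.
Open Scope R_scope.

Record Cplx := mkC { Re : R; Im : R }.
Definition Cadd (a b : Cplx) : Cplx := mkC (Re a + Re b) (Im a + Im b).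
Definition Cmul (a b : Cplx) : Cplx :=
  mkC (Re a * Re b - Im a * Im b) (Re a * Im b + Im a * Re b).
Definition Cconj (a : Cplx) : Cplx := mkC (Re a) (- Im a).
Definition Cmod (a : Cplx) : R := sqrt (Re a * Re a + Im a * Im a).
Definition C1 : Cplx := mkC 1 0.

Record CStarAlg := {
  car :> Type;
  zero : car; one : car;
  add : car -> car -> car; opp : car -> car; mul : car -> car -> car;
  smul : Cplx -> car -> car; star : car -> car; norm : car -> R;
  addA : forall x y z, add x (add y z) = add (add x y) z;
  addC : forall x y, add x y = add y x;
  add0 : forall x, add zero x = x;
  addN : forall x, add (opp x) x = zero;
  mulA : forall x y z, mul x (mul y z) = mul (mul x y) z;
  mul1l : forall x, mul one x = x;
  mul1r : forall x, mul x one = x;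
  mulDl : forall x y z, mul (add x y) z = add (mul x z) (mul y z);
  mulDr : forall x y z, mul x (add y z) = add (mul x y) (mul x z);
  smulDr : forall a x y, smul a (add x y) = add (smul a x) (smul a y);
  smulDl : forall a b x, smul (Cadd a b) x = add (smul a x) (smul b x);
  smulA : forall a b x, smul (Cmul a b) x = smul a (smul b x);
  smul1 : forall x, smul C1 x = x;
  smul_mull : forall a x y, smul a (mul x y) = mul (smul a x) y;
  smul_mulr : forall a x y, smul a (mul x y) = mul x (smul a y);
  starK : forall x, star (star x) = x;
  starD : forall x y, star (add x y) = add (star x) (star y);
  starM : forall x y, star (mul x y) = mul (star y) (star x);
  starZ : forall a x, star (smul a x) = smul (Cconj a) (star x);
  norm_ge0 : forall x, 0 <= norm x;
  norm_eq0 : forall x, norm x = 0 -> x = zero;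
  norm_triangle : forall x y, norm (add x y) <= norm x + norm y;
  normZ : forall a x, norm (smul a x) = Cmod a * norm x;
  normM : forall x y, norm (mul x y) <= norm x * norm y;
  norm_cstar : forall x, norm (mul (star x) x) = norm x * norm x;
  complete : forall u : nat -> car,
    (forall eps, 0 < eps -> exists N, forall m n, (N <= m)%nat -> (N <= n)%nat ->
        norm (add (u m) (opp (u n))) < eps) ->
    exists l, forall eps, 0 < eps -> exists N, forall n, (N <= n)%nat ->
        norm (add (u n) (opp l)) < eps
}.

Arguments zero {c}. Arguments one {c}. Arguments add {c}. Arguments opp {c}.
Arguments mul {c}. Arguments smul {c}. Arguments star {c}. Arguments norm {c}.

Section Defs.
Variable A : CStarAlg.

Definition sub (x y : A) : A := add x (opp y).

Definition projection (p : A) : Prop := mul p p = p /\ star p = p.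

Definition mvn (p q : A) : Prop :=
  exists v : A, mul (star v) v = p /\ mul v (star v) = q.

(* e is a subprojection of p (for projections: e <= p iff e = e p) *)
Definition subproj (e p : A) : Prop := projection e /\ mul e p = e.

Definition properly_infinite (p : A) : Prop :=
  projection p /\
  exists e f : A, subproj e p /\ subproj f p /\ mul e f = zero /\
                  mvn e p /\ mvn p f.

Definition closed_ideal (I : A -> Prop) : Prop :=
  I zero /\
  (forall x y, I x -> I y -> I (add x y)) /\
  (forall a x, I x -> I (smul a x)) /\
  (forall a x, I x -> I (mul a x)) /\
  (forall a x, I x -> I (mul x a)) /\
  (forall (u : nat -> A) l, (forall n, I (u n)) ->
     (forall eps, 0 < eps -> exists N, forall n, (N <= n)%nat ->
        norm (sub (u n) l) < eps) -> I l).

Definition full (p : A) : Prop :=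
  forall I, closed_ideal I -> I p -> forall x, I x.

Definition homotopic_proj (p q : A) : Prop :=
  exists P : R -> A,
    (forall t, 0 <= t <= 1 -> projection (P t)) /\
    P 0 = p /\ P 1 = q /\
    (forall t, 0 <= t <= 1 -> forall eps, 0 < eps -> exists delta, 0 < delta /\
       forall s, 0 <= s <= 1 -> Rabs (s - t) < delta -> norm (sub (P s) (P t)) < eps).

End Defs.

(* Main.v *)
Require Import Defs.
From Stdlib Require Import Reals Lra Lia List.
Open Scope R_scope.

Arguments addA {c}. Arguments addC {c}. Arguments add0 {c}. Arguments addN {c}. Arguments mulA {c}. Arguments mul1l {c}. Arguments mul1r {c}. Arguments mulDl {c}. Arguments mulDr {c}. Arguments smulDr {c}. Arguments smulDl {c}. Arguments smulA {c}. Arguments smul1 {c}. Arguments smul_mull {c}. Arguments smul_mulr {c}. Arguments starK {c}. Arguments starD {c}. Arguments starM {c}. Arguments starZ {c}. Arguments norm_ge0 {c}. Arguments norm_eq0 {c}. Arguments norm_triangle {c}. Arguments normZ {c}. Arguments normM {c}. Arguments norm_cstar {c}. Arguments complete {c}.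

Definition rs (a : R) : Cplx := mkC a 0.

Section Basics.
Variable A : CStarAlg.
Implicit Types x y z : A.

Declare Scope ca_scope.
Local Notation "x +' y" := (@add A x y) (at level 50, left associativity).
Local Notation "x *' y" := (@mul A x y) (at level 40, left associativity).
Local Notation "-' x" := (@opp A x) (at level 35, x at level 35).
Local Notation "x ^*" := (@star A x) (at level 30).
Local Notation "0'" := (@zero A).

Lemma add0r x : x +' 0' = x.
Proof. rewrite addC; apply add0. Qed.
Lemma addNr x : x +' -' x = 0'.
Proof. rewrite addC; apply addN. Qed.
Lemma addKl x y : -' x +' (x +' y) = y.
Proof. rewrite addA, addN; apply add0. Qed.
Lemma add_cancel_l x y z : x +' y = x +' z -> y = z.
Proof. intro H. rewrite <- (addKl x y), H. apply addKl. Qed.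
Lemma mul0r x : 0' *' x = 0'.
Proof.
  apply (add_cancel_l (0' *' x)). rewrite <- mulDl, add0, add0r. reflexivity.
Qed.
Lemma mulr0 x : x *' 0' = 0'.
Proof.
  apply (add_cancel_l (x *' 0')). rewrite <- mulDr, add0, add0r. reflexivity.
Qed.
Lemma oppK x : -' -' x = x.
Proof. apply (add_cancel_l (-' x)). rewrite addN, addNr. reflexivity. Qed.
Lemma opp0 : -' 0' = 0'.
Proof. apply (add_cancel_l 0'). rewrite addNr, add0. reflexivity. Qed.
Lemma oppD x y : -' (x +' y) = -' x +' -' y.
Proof.
  apply (add_cancel_l (x +' y)). rewrite addNr.
  rewrite <- addA, (addC y), <- addA, addN, add0r, addNr. reflexivity.
Qed.
Lemma mulNl x y : (-' x) *' y = -' (x *' y).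
Proof.
  apply (add_cancel_l (x *' y)). rewrite addNr, <- mulDl, addNr, mul0r. reflexivity.
Qed.
Lemma mulNr x y : x *' (-' y) = -' (x *' y).
Proof.
  apply (add_cancel_l (x *' y)). rewrite addNr, <- mulDr, addNr, mulr0. reflexivity.
Qed.
Lemma star0 : (0' : A)^* = 0'.
Proof.
  apply (add_cancel_l (0'^*)). rewrite <- starD, add0, add0r. reflexivity.
Qed.
Lemma starN x : (-' x)^* = -' (x^*).
Proof.
  apply (add_cancel_l (x^*)). rewrite addNr, <- starD, addNr, star0. reflexivity.
Qed.
Lemma star1 : (@one A)^* = @one A.
Proof.
  assert (H: (@mul A one (one^*))^* = ((@one A)^*)^*) by now rewrite mul1l.
  rewrite starM, starK, mul1l in H. exact H.
Qed.
Lemma sub_eq0 x y : sub A x y = 0' -> x = y.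
Proof. unfold sub. intro H. apply (add_cancel_l (-' y)). rewrite addN, addC. exact H. Qed.
Lemma subrr x : sub A x x = 0'.
Proof. apply addNr. Qed.


Local Notation "a .* x" := (@smul A (rs a) x) (at level 40).

Lemma smulc0 c : @smul A c 0' = 0'.
Proof. apply (add_cancel_l (smul c 0')). rewrite <- smulDr, add0, add0r. reflexivity. Qed.
Lemma rs_add a b : Cadd (rs a) (rs b) = rs (a + b).
Proof. unfold Cadd, rs; simpl; f_equal; ring. Qed.
Lemma rs_mul a b : Cmul (rs a) (rs b) = rs (a * b).
Proof. unfold Cmul, rs; simpl; f_equal; ring. Qed.
Lemma smul_add a b x : a .* x +' b .* x = (a + b) .* x.
Proof. rewrite <- smulDl, rs_add. reflexivity. Qed.
Lemma smul_smul a b x : a .* (b .* x) = (a * b) .* x.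
Proof. rewrite <- smulA, rs_mul. reflexivity. Qed.
Lemma smul_1 x : 1 .* x = x.
Proof. exact (smul1 x). Qed.
Lemma smul_0 x : 0 .* x = 0'.
Proof.
  apply (add_cancel_l (0 .* x)). rewrite smul_add, add0r. f_equal. f_equal. ring.
Qed.
Lemma smul_N1 x : (-1) .* x = -' x.
Proof.
  apply (add_cancel_l x). rewrite addNr. rewrite <- (smul_1 x) at 1.
  rewrite smul_add. replace (1 + -1) with 0 by ring. apply smul_0.
Qed.
Lemma smul_opp a x : a .* (-' x) = (- a) .* x.
Proof. rewrite <- smul_N1, smul_smul. f_equal. f_equal. ring. Qed.
Lemma opp_smul a x : -' (a .* x) = (- a) .* x.
Proof. rewrite <- smul_N1, smul_smul. f_equal. f_equal. ring. Qed.
Lemma smul_addr a x y : a .* (x +' y) = a .* x +' a .* y.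
Proof. apply smulDr. Qed.
Lemma mul_smull a x y : (a .* x) *' y = a .* (x *' y).
Proof. symmetry; apply smul_mull. Qed.
Lemma mul_smulr a x y : x *' (a .* y) = a .* (x *' y).
Proof. symmetry; apply smul_mulr. Qed.
Lemma star_smul a x : (a .* x)^* = a .* (x^*).
Proof. rewrite starZ. f_equal. unfold Cconj, rs; simpl; f_equal; ring. Qed.
Lemma Cmod_rs a : Cmod (rs a) = Rabs a.
Proof. unfold Cmod, rs; simpl. rewrite Rmult_0_l, Rplus_0_r. apply sqrt_Rsqr_abs. Qed.
Lemma norm_smul a x : norm (a .* x) = Rabs a * norm x.
Proof. rewrite normZ, Cmod_rs. reflexivity. Qed.
Lemma norm0 : norm (0' : A) = 0.
Proof. rewrite <- (smul_0 0'), norm_smul, Rabs_R0. ring. Qed.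
Lemma smulN c x : @smul A c (-' x) = -' (smul c x).
Proof.
  apply (add_cancel_l (smul c x)). rewrite <- smulDr, !addNr, smulc0. reflexivity.
Qed.
Lemma smul_sub c x y : @smul A c (sub A x y) = sub A (smul c x) (smul c y).
Proof. unfold sub. rewrite smulDr, smulN. reflexivity. Qed.
Lemma norm_opp x : norm (-' x) = norm x.
Proof. rewrite <- smul_N1, norm_smul, Rabs_left by lra. ring. Qed.
Lemma norm_sub_sym x y : norm (sub A x y) = norm (sub A y x).
Proof.
  unfold sub. rewrite <- norm_opp, oppD, oppK, addC. reflexivity.
Qed.
Lemma norm_sub_le x y z : norm (sub A x z) <= norm (sub A x y) + norm (sub A y z).
Proof.
  unfold sub. replace (x +' -' z) with ((x +' -' y) +' (y +' -' z)).
  apply norm_triangle.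
  rewrite <- addA, (addA (-' y)), addN, add0. reflexivity.
Qed.
Lemma norm_star_le x : norm x <= norm (x^*).
Proof.
  destruct (Req_dec (norm x) 0) as [H|H].
  - rewrite H. apply norm_ge0.
  - pose proof (norm_cstar x) as E. pose proof (normM (x^*) x) as M.
    rewrite E in M. pose proof (norm_ge0 x).
    apply Rmult_le_reg_r with (norm x). lra. lra.
Qed.
Lemma norm_star x : norm (x^*) = norm x.
Proof.
  apply Rle_antisym. rewrite <- (starK x) at 2. apply norm_star_le. apply norm_star_le.
Qed.
Lemma norm_mul_le x y : norm (x *' y) <= norm x * norm y.
Proof. apply normM. Qed.
Lemma sub_zero x : sub A x 0' = x.
Proof. unfold sub. rewrite opp0. apply add0r. Qed.
Lemma norm_eq0_sub x y : norm (sub A x y) = 0 -> x = y.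
Proof. intro H. apply sub_eq0. apply norm_eq0. exact H. Qed.
Lemma norm_small_eq x y : (forall eps, 0 < eps -> norm (sub A x y) < eps) -> x = y.
Proof.
  intro H. apply norm_eq0_sub. pose proof (norm_ge0 (sub A x y)).
  destruct (Req_dec (norm (sub A x y)) 0) as [E|E]; auto.
  specialize (H (norm (sub A x y))). lra.
Qed.

Lemma mul_subl x y z : sub A x y *' z = sub A (x *' z) (y *' z).
Proof. unfold sub. rewrite mulDl, mulNl. reflexivity. Qed.
Lemma mul_subr x y z : z *' sub A x y = sub A (z *' x) (z *' y).
Proof. unfold sub. rewrite mulDr, mulNr. reflexivity. Qed.
Lemma star_sub x y : (sub A x y)^* = sub A (x^*) (y^*).
Proof. unfold sub. rewrite starD, starN. reflexivity. Qed.
Lemma cstar_zero x : x^* *' x = 0' -> x = 0'.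
Proof.
  intro H. apply norm_eq0. pose proof (norm_cstar x) as E. rewrite H, norm0 in E.
  pose proof (norm_ge0 x). nra.
Qed.
Lemma proj_norm e : projection A e -> norm e <= 1.
Proof.
  intros [H1 H2]. pose proof (norm_cstar e) as E. rewrite H2, H1 in E.
  pose proof (norm_ge0 e). nra.
Qed.
Lemma pi_right v e : projection A e -> v^* *' v = e -> v *' e = v.
Proof.
  intros [P1 P2] H. symmetry. apply sub_eq0. apply cstar_zero.
  assert (H': forall x, x *' v^* *' v = x *' e) by (intro; rewrite <- mulA, H; reflexivity).
  rewrite star_sub, starM, P2, mul_subl, !mul_subr, !mulA, H, !H', !P1.
  rewrite !subrr; try apply subrr; reflexivity.
Qed.
Lemma pi_left v f : projection A f -> v *' v^* = f -> f *' v = v.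
Proof.
  intros P H. assert (E: (v^*) *' f = v^*).
  { apply (pi_right (v^*) f P). rewrite starK. exact H. }
  destruct P as [_ P2]. rewrite <- (starK v) at 2. rewrite <- E, starM, P2, starK. reflexivity.
Qed.

Lemma sub_add x y u w : sub A (x +' y) (u +' w) = sub A x u +' sub A y w.
Proof.
  unfold sub. rewrite oppD. rewrite <- !addA. f_equal. rewrite !addA. f_equal. apply addC.
Qed.
Lemma norm_sub_add x y u w : norm (sub A (x +' y) (u +' w)) <= norm (sub A x u) + norm (sub A y w).
Proof. rewrite sub_add. apply norm_triangle. Qed.

Lemma two_isos r : properly_infinite A r ->
  exists s1 s2 : A, s1^* *' s1 = r /\ s2^* *' s2 = r /\ s1^* *' s2 = 0' /\
     r *' s1 = s1 /\ r *' s2 = s2.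
Proof.
  intros [Pr [e [f [[Pe Her] [[Pf Hfr] [Hef [[v [Hv1 Hv2]] [u [Hu1 Hu2]]]]]]]]].
  exists (v^*), u.
  assert (Hve : v *' e = v) by (apply pi_right; auto).
  assert (Hfu : f *' u = u) by (apply pi_left; auto).
  assert (Hrf : r *' f = f).
  { destruct Pr as [_ Sr]; destruct Pf as [_ Sf].
    assert (E := f_equal (@star A) Hfr). rewrite starM, Sr, Sf in E. exact E. }
  assert (Hvr : v *' r = v) by (rewrite <- Hve, <- mulA, Her; reflexivity).
  repeat split.
  - rewrite starK. exact Hv2.
  - exact Hu1.
  - rewrite starK, <- Hve, <- Hfu, <- mulA, (mulA e), Hef, mul0r, mulr0. reflexivity.
  - destruct Pr as [_ Sr]. rewrite <- Sr at 1. rewrite <- starM, Hvr. reflexivity.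
  - rewrite <- Hfu, mulA, Hrf. reflexivity.
Qed.

Definition Iset r (x : A) : Prop :=
  forall eps, 0 < eps -> exists a b, norm (sub A x (a *' r *' b)) < eps.

Lemma Iset_ideal r : properly_infinite A r -> closed_ideal A (Iset r).
Proof.
  intro Hr. destruct (two_isos r Hr) as [s1 [s2 [H11 [H22 [H12 [Hr1 Hr2]]]]]].
  assert (Hs1r : s1^* *' r = s1^*).
  { destruct Hr as [[_ Sr] _]. rewrite <- Sr, <- starM, Hr1. reflexivity. }
  assert (Hs2r : s2^* *' r = s2^*).
  { destruct Hr as [[_ Sr] _]. rewrite <- Sr, <- starM, Hr2. reflexivity. }
  assert (H21 : s2^* *' s1 = 0').
  { rewrite <- (starK s1), <- starM, H12, star0. reflexivity. }
  repeat split.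
  - intros eps Heps. exists 0', 0'. rewrite mulr0, sub_zero, norm0. exact Heps.
  - intros x y Hx Hy eps Heps.
    destruct (Hx (eps/2)) as [a [b Ha]]; [lra|].
    destruct (Hy (eps/2)) as [a' [b' Ha']]; [lra|].
    exists (a *' s1^* +' a' *' s2^*), (s1 *' b +' s2 *' b').
    replace ((a *' s1^* +' a' *' s2^*) *' r *' (s1 *' b +' s2 *' b'))
      with (a *' r *' b +' a' *' r *' b').
    + pose proof (norm_sub_add x y (a *' r *' b) (a' *' r *' b')). lra.
    + rewrite <- !mulA, (mulDr r), !(mulA r), Hr1, Hr2, !mulDl, !mulDr, <- !mulA,
        !(mulA (s1^*)), !(mulA (s2^*)).
      rewrite H11, H12, H21, H22, !mul0r, !mulr0, add0r, add0. reflexivity.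
  - intros c x Hx eps Heps.
    destruct (Hx (eps / (Cmod c + 1))) as [a [b Ha]].
    { apply Rdiv_lt_0_compat; auto. pose proof (sqrt_pos (Re c * Re c + Im c * Im c)).
      unfold Cmod. lra. }
    exists (smul c a), b.
    assert (Hc : 0 <= Cmod c) by (apply sqrt_pos).
    replace (smul c a *' r *' b) with (smul c (a *' r *' b)) by (rewrite !smul_mull; reflexivity).
    rewrite <- smul_sub, normZ.
    apply Rle_lt_trans with (Cmod c * (eps / (Cmod c + 1))).
    + apply Rmult_le_compat_l; auto. apply Rlt_le; auto.
    + apply Rlt_le_trans with ((Cmod c + 1) * (eps / (Cmod c + 1))).
      * apply Rmult_lt_compat_r; [apply Rdiv_lt_0_compat|]; lra.
      * right. field. lra.
  - intros c x Hx eps Heps.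
    destruct (Hx (eps / (norm c + 1))) as [a [b Ha]].
    { apply Rdiv_lt_0_compat; auto. pose proof (norm_ge0 c). lra. }
    exists (c *' a), b. replace (c *' a *' r *' b) with (c *' (a *' r *' b)) by (rewrite !mulA; reflexivity). rewrite <- mul_subr.
    pose proof (norm_ge0 c).
    apply Rle_lt_trans with (norm c * norm (sub A x (a *' r *' b))). apply normM.
    apply Rle_lt_trans with (norm c * (eps / (norm c + 1))).
    + apply Rmult_le_compat_l; auto. apply Rlt_le; auto.
    + apply Rlt_le_trans with ((norm c + 1) * (eps / (norm c + 1))).
      * apply Rmult_lt_compat_r; [apply Rdiv_lt_0_compat|]; lra.
      * right. field. lra.
  - intros c x Hx eps Heps.
    destruct (Hx (eps / (norm c + 1))) as [a [b Ha]].
    { apply Rdiv_lt_0_compat; auto. pose proof (norm_ge0 c). lra. }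
    exists a, (b *' c). rewrite mulA, <- mul_subl.
    pose proof (norm_ge0 c).
    apply Rle_lt_trans with (norm (sub A x (a *' r *' b)) * norm c). apply normM.
    apply Rle_lt_trans with ((eps / (norm c + 1)) * norm c).
    + apply Rmult_le_compat_r; auto. apply Rlt_le; auto.
    + apply Rlt_le_trans with ((eps / (norm c + 1)) * (norm c + 1)).
      * apply Rmult_lt_compat_l; [apply Rdiv_lt_0_compat|]; lra.
      * right. field. lra.
  - intros u l Hu Hl eps Heps.
    destruct (Hl (eps/2)) as [N HN]; [lra|].
    destruct (Hu N (eps/2)) as [a [b Hab]]; [lra|].
    exists a, b. specialize (HN N (le_n N)).
    pose proof (norm_sub_le l (u N) (a *' r *' b)).
    rewrite norm_sub_sym in HN. lra.
Qed.

Lemma full_approx r x : properly_infinite A r -> full A r ->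
  forall eps, 0 < eps -> exists a b, norm (sub A x (a *' r *' b)) < eps.
Proof.
  intros Hr Hf. apply (Hf (Iset r) (Iset_ideal r Hr)).
  intros eps Heps. exists (@one A), (@one A). rewrite mul1l, mul1r, subrr, norm0. exact Heps.
Qed.

Inductive gterm := GAtom (n : nat) | GAdd (a b : gterm) | GOpp (a : gterm)
  | GSub (a b : gterm) | GZero | GSmul (c : R) (a : gterm).

Fixpoint geval (env : list A) (t : gterm) : A :=
  match t with
  | GAtom n => nth n env 0'
  | GAdd a b => geval env a +' geval env b
  | GOpp a => -' geval env a
  | GSub a b => sub A (geval env a) (geval env b)
  | GZero => 0'
  | GSmul c a => c .* geval env a
  end.

Fixpoint ladd (l1 l2 : list R) : list R :=
  match l1, l2 with
  | nil, _ => l2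
  | _, nil => l1
  | c1 :: t1, c2 :: t2 => (c1 + c2) :: ladd t1 t2
  end.
Definition lscale (c : R) (l : list R) : list R := map (fun u : R => c * u) l.
Fixpoint lunit (n : nat) : list R :=
  match n with O => 1 :: nil | S m => 0 :: lunit m end.

Fixpoint gnf (t : gterm) : list R :=
  match t with
  | GAtom n => lunit n
  | GAdd a b => ladd (gnf a) (gnf b)
  | GOpp a => lscale (-1) (gnf a)
  | GSub a b => ladd (gnf a) (lscale (-1) (gnf b))
  | GZero => nil
  | GSmul c a => lscale c (gnf a)
  end.

Fixpoint evl (l : list R) (env : list A) : A :=
  match l, env with
  | c :: t, e :: es => c .* e +' evl t es
  | _, _ => 0'
  end.

Lemma add_swap4 x y u w : (x +' y) +' (u +' w) = (x +' u) +' (y +' w).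
Proof. rewrite <- !addA. f_equal. rewrite !addA. f_equal. apply addC. Qed.

Lemma evl_add l1 l2 env : evl (ladd l1 l2) env = evl l1 env +' evl l2 env.
Proof.
  revert l2 env. induction l1 as [|c1 t1 IH]; intros l2 env.
  - simpl. destruct env; rewrite add0; reflexivity.
  - destruct l2 as [|c2 t2]; simpl.
    + destruct env; simpl; rewrite add0r; reflexivity.
    + destruct env as [|e es]; simpl. rewrite add0; reflexivity.
      rewrite IH, <- smul_add. apply add_swap4.
Qed.
Lemma evl_scale c l env : evl (lscale c l) env = c .* evl l env.
Proof.
  revert env. induction l as [|a t IH]; intro env; simpl.
  - destruct env; rewrite smulc0; reflexivity.
  - destruct env as [|e es]; simpl. rewrite smulc0; reflexivity.
    rewrite IH, smul_addr, smul_smul. reflexivity.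
Qed.
Lemma evl_unit n env : evl (lunit n) env = nth n env 0'.
Proof.
  revert env. induction n as [|n IH]; intro env; destruct env as [|e es]; simpl; try reflexivity.
  - rewrite smul_1, add0r. reflexivity.
  - rewrite IH, smul_0, add0. reflexivity.
Qed.
Lemma gnf_sound env t : geval env t = evl (gnf t) env.
Proof.
  induction t; simpl.
  - symmetry; apply evl_unit.
  - rewrite evl_add, IHt1, IHt2. reflexivity.
  - rewrite evl_scale, IHt, smul_N1. reflexivity.
  - rewrite evl_add, evl_scale, IHt1, IHt2, smul_N1. reflexivity.
  - destruct env; reflexivity.
  - rewrite evl_scale, IHt. reflexivity.
Qed.

Fixpoint allz (l : list R) : Prop :=
  match l with nil => True | c :: t => c = 0 /\ allz t end.
Fixpoint eqpad (l1 l2 : list R) : Prop :=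
  match l1 with
  | nil => allz l2
  | c1 :: t1 => match l2 with nil => allz l1 | c2 :: t2 => c1 = c2 /\ eqpad t1 t2 end
  end.

Lemma evl_zero l env : allz l -> evl l env = 0'.
Proof.
  revert env; induction l as [|c t IH]; intros env H; simpl.
  - destruct env; reflexivity.
  - destruct env as [|e es]. reflexivity. destruct H as [H1 H2].
    rewrite H1, smul_0, IH; auto. apply add0.
Qed.
Lemma evl_eqpad l1 l2 env : eqpad l1 l2 -> evl l1 env = evl l2 env.
Proof.
  revert l2 env. induction l1 as [|c1 t1 IH]; intros l2 env H.
  - simpl in H. rewrite (evl_zero l2 env H). destruct env; reflexivity.
  - destruct l2 as [|c2 t2].
    + rewrite (evl_zero (c1 :: t1) env H). destruct env; reflexivity.
    + destruct H as [H1 H2]. destruct env as [|e es]; simpl. reflexivity.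
      rewrite H1, (IH t2 es H2). reflexivity.
Qed.
Lemma gterm_eq env t1 t2 : eqpad (gnf t1) (gnf t2) -> geval env t1 = geval env t2.
Proof. intro H. rewrite !gnf_sound. apply evl_eqpad. exact H. Qed.
End Basics.

Ltac lookup x l :=
  match l with
  | cons x _ => constr:(O)
  | cons _ ?t => let n := lookup x t in constr:(S n)
  end.

Ltac reify_atom x env :=
  match constr:(tt) with
  | _ => let n := lookup x env in constr:((GAtom n, env))
  | _ => let n := eval compute in (length env) in
         let env' := eval cbv [app] in (app env (cons x nil)) in
         constr:((GAtom n, env'))
  end.

Ltac reify e env :=
  match e with
  | @add _ ?a ?b =>
      match reify a env with (?t1, ?e1) =>
      match reify b e1 with (?t2, ?e2) => constr:((GAdd t1 t2, e2)) end end
  | sub _ ?a ?b =>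
      match reify a env with (?t1, ?e1) =>
      match reify b e1 with (?t2, ?e2) => constr:((GSub t1 t2, e2)) end end
  | @opp _ ?a =>
      match reify a env with (?t1, ?e1) => constr:((GOpp t1, e1)) end
  | @zero _ => constr:((GZero, env))
  | @smul _ (rs ?c) ?a =>
      match reify a env with (?t1, ?e1) => constr:((GSmul c t1, e1)) end
  | _ => reify_atom e env
  end.

Ltac agroup :=
  match goal with
  | |- @eq (car ?A) ?L ?R =>
      match reify L (@nil (car A)) with (?tL, ?e1) =>
      match reify R e1 with (?tR, ?e2) =>
        change (geval A e2 tL = geval A e2 tR);
        apply gterm_eq; cbn [gnf ladd lscale lunit map eqpad allz];
        repeat split; first [ring | field | lra]
      end end
  end.


Ltac mexpand := repeat progress (rewrite ?mulDl, ?mulDr, ?mul_subl, ?mul_subr, ?mul_smull,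
   ?mul_smulr, ?mulNl, ?mulNr, ?mul0r, ?mulr0, ?mulA).
Ltac sexpand := repeat progress (rewrite ?starD, ?starM, ?star_sub, ?starN, ?star_smul, ?starK, ?star0).

Section Main.
Variable A : CStarAlg.
Implicit Types x y z : A.
Local Notation "x +' y" := (@add A x y) (at level 50, left associativity).
Local Notation "x *' y" := (@mul A x y) (at level 40, left associativity).
Local Notation "-' x" := (@opp A x) (at level 35, x at level 35).
Local Notation "x ^*" := (@star A x) (at level 30).
Local Notation "0'" := (@zero A).
Local Notation "a .* x" := (@smul A (rs a) x) (at level 40).
Local Notation "x -' y" := (sub A x y) (at level 50, left associativity).

Lemma rel_assoc u v w : u *' v = w -> forall x, x *' u *' v = x *' w.
Proof. intros H x. rewrite <- mulA, H. reflexivity. Qed.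

Lemma norm_add_le x y : norm (x +' y) <= norm x + norm y.
Proof. apply norm_triangle. Qed.
Lemma norm_sub_le2 x y : norm (x -' y) <= norm x + norm y.
Proof. unfold sub. rewrite <- (norm_opp A y). apply norm_triangle. Qed.

Lemma sq_step_id p k : p *' p = p -> p *' k = k -> k *' p = k ->
  p -' ((p +' (1/2) .* k) *' (p -' k) *' (p +' (1/2) .* k)) = (3/4) .* (k *' k) +' (1/4) .* (k *' k *' k).
Proof.
  intros Hpp Hpk Hkp.
  pose proof (rel_assoc _ _ _ Hpp) as Hpp'. pose proof (rel_assoc _ _ _ Hpk) as Hpk'.
  pose proof (rel_assoc _ _ _ Hkp) as Hkp'.
  mexpand. rewrite ?Hpp', ?Hpk', ?Hkp', ?Hpp, ?Hpk, ?Hkp. rewrite ?smul_smul. agroup.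
Qed.

Lemma half_pow_bounds n : 0 < (1/2)^n <= 1.
Proof.
  induction n as [|n IH]; simpl. lra. lra.
Qed.

Lemma Rabs_pos_eq' a : 0 <= a -> Rabs a = a.
Proof. apply Rabs_pos_eq. Qed.

Fixpoint sqseq (p k0 : A) (n : nat) : A * A :=
  match n with
  | O => (p, k0)
  | S n => let (M, k) := sqseq p k0 n in
      (M *' (p +' (1/2) .* k), p -' ((p +' (1/2) .* k) *' (p -' k) *' (p +' (1/2) .* k)))
  end.

Definition sq_inv (p k0 : A) (n : nat) (Mk : A * A) : Prop :=
  let (M, k) := Mk in
  k^* = k /\ p *' k = k /\ k *' p = k /\ norm k <= (1/4) * ((1/2)^n * (1/2)^n) /\
  p *' M = M /\ M *' p = M /\ M^* *' (p -' k0) *' M = p -' k /\ norm M <= 2 - (1/2)^n.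

Lemma sq_inv_all p k0 : projection A p -> k0^* = k0 -> p *' k0 = k0 -> k0 *' p = k0 ->
  norm k0 <= 1/4 -> forall n, sq_inv p k0 n (sqseq p k0 n).
Proof.
  intros [Hpp Hps] Hks Hpk Hkp Hkn n.
  induction n as [|n IH].
  - simpl. repeat split; auto.
    + lra.
    + rewrite Hps. rewrite mul_subr, mul_subl, Hpp, Hpk, Hpp, Hkp. reflexivity.
    + pose proof (proj_norm A p (conj Hpp Hps)). lra.
  - simpl. destruct (sqseq p k0 n) as [M k].
    destruct IH as [Iks [Ipk [Ikp [Ikn [IpM [IMp [IMM IMn]]]]]]].
    pose proof (half_pow_bounds n) as Hu.
    set (u := (1/2)^n) in *.
    assert (Hk0 : 0 <= norm k) by apply norm_ge0.
    assert (Hku : norm k <= 1/4) by nra.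
    rewrite (sq_step_id p k Hpp Ipk Ikp).
    pose proof (rel_assoc _ _ _ Hpp) as Hpp'. pose proof (rel_assoc _ _ _ Ipk) as Hpk'.
    pose proof (rel_assoc _ _ _ Ikp) as Hkp'.
    repeat split.
    + sexpand. rewrite Iks. mexpand. reflexivity.
    + mexpand. rewrite ?Hpk', ?Ipk. reflexivity.
    + mexpand. rewrite ?Hkp', ?Ikp. reflexivity.
    + eapply Rle_trans. apply norm_add_le. rewrite !norm_smul, !Rabs_pos_eq by lra.
      assert (N2 : norm (k *' k) <= norm k * norm k) by apply normM.
      assert (N3 : norm (k *' k *' k) <= norm k * norm k * norm k).
      { eapply Rle_trans. apply normM. apply Rmult_le_compat_r; auto. }
      assert (0 <= norm (k *' k *' k)) by apply norm_ge0.
      assert (0 <= norm (k *' k)) by apply norm_ge0.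
      assert (E: (1/2)^(S n) = (1/2) * u) by reflexivity. rewrite E.
      assert (norm k * norm k <= norm k * ((1/4) * (u*u))) by (apply Rmult_le_compat_l; auto).
      assert (norm k * norm k * norm k <= norm k * norm k * (1/4)) by (apply Rmult_le_compat_l; nra).
      nra.
    + rewrite mulA, IpM. reflexivity.
    + rewrite <- mulA, mulDl, Hpp, mul_smull, Ikp. reflexivity.
    + sexpand. rewrite Iks, Hps.
      replace ((p +' (1/2) .* k) *' M^* *' (p -' k0) *' (M *' (p +' (1/2) .* k)))
        with ((p +' (1/2) .* k) *' (M^* *' (p -' k0) *' M) *' (p +' (1/2) .* k))
        by (rewrite !mulA; reflexivity).
      rewrite IMM, <- (sq_step_id p k Hpp Ipk Ikp). agroup.
    + eapply Rle_trans. apply normM.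
      assert (Hm : norm (p +' (1/2) .* k) <= 1 + (1/2) * norm k).
      { eapply Rle_trans. apply norm_add_le. rewrite norm_smul, Rabs_pos_eq by lra.
        pose proof (proj_norm A p (conj Hpp Hps)). lra. }
      assert (0 <= norm M) by apply norm_ge0.
      assert (0 <= norm (p +' (1/2) .* k)) by apply norm_ge0.
      assert (E: (1/2)^(S n) = (1/2) * u) by reflexivity. rewrite E.
      apply Rle_trans with ((2 - u) * (1 + (1/2) * ((1/4) * (u*u)))).
      * apply Rmult_le_compat; auto. lra.
      * nra.
Qed.

Lemma half_pow_mono N d : (1/2)^(N + d) <= (1/2)^N.
Proof.
  induction d as [|d IH]. rewrite Nat.add_0_r. lra.
  rewrite Nat.add_succ_r. simpl. pose proof (half_pow_bounds (N + d)). lra.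
Qed.

Lemma half_pow_small eps : 0 < eps -> exists N, (1/2)^N < eps.
Proof.
  intro H. destruct (pow_lt_1_zero (1/2)) with eps as [N HN]; auto.
  rewrite Rabs_pos_eq; lra.
  exists N. specialize (HN N (le_n N)). rewrite Rabs_pos_eq in HN; auto.
  pose proof (half_pow_bounds N). lra.
Qed.

Lemma norm3 x y z : norm (x *' y *' z) <= norm x * norm y * norm z.
Proof.
  eapply Rle_trans. apply normM. apply Rmult_le_compat_r. apply norm_ge0. apply normM.
Qed.

Section SQ.
Variables (p k0 : A).
Hypotheses (Pp : projection A p) (Hks : k0^* = k0) (Hpk : p *' k0 = k0) (Hkp : k0 *' p = k0)
  (Hkn : norm k0 <= 1/4).

Definition Ms n := fst (sqseq p k0 n).
Definition Ks n := snd (sqseq p k0 n).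

Lemma inv_n n : Ks n ^* = Ks n /\ p *' Ks n = Ks n /\ Ks n *' p = Ks n /\
  norm (Ks n) <= (1/4) * ((1/2)^n * (1/2)^n) /\
  p *' Ms n = Ms n /\ Ms n *' p = Ms n /\ Ms n ^* *' (p -' k0) *' Ms n = p -' Ks n /\
  norm (Ms n) <= 2 - (1/2)^n.
Proof.
  pose proof (sq_inv_all p k0 Pp Hks Hpk Hkp Hkn n) as H. unfold Ms, Ks.
  destruct (sqseq p k0 n) as [M k]. exact H.
Qed.

Lemma Ms_step n : norm (Ms (S n) -' Ms n) <= (1/2)^(S n).
Proof.
  destruct (inv_n n) as [_ [_ [_ [Ikn [_ [IMp [_ IMn]]]]]]].
  assert (E : Ms (S n) = Ms n *' (p +' (1/2) .* Ks n)).
  { unfold Ms, Ks. simpl. destruct (sqseq p k0 n). reflexivity. }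
  rewrite E, mulDr, IMp, mul_smulr.
  replace (Ms n +' (1/2) .* (Ms n *' Ks n) -' Ms n) with ((1/2) .* (Ms n *' Ks n)) by agroup.
  rewrite norm_smul, Rabs_pos_eq by lra.
  pose proof (normM (Ms n) (Ks n)). pose proof (half_pow_bounds n).
  pose proof (norm_ge0 (Ms n)). pose proof (norm_ge0 (Ks n)).
  set (u := (1/2)^n) in *. change ((1/2)^(S n)) with (1/2 * u).
  assert (norm (Ms n) * norm (Ks n) <= 2 * ((1/4) * (u * u))).
  { apply Rmult_le_compat; auto; lra. }
  nra.
Qed.

Lemma Ms_cauchy n d : norm (Ms (n + d) -' Ms n) <= (1/2)^n - (1/2)^(n+d).
Proof.
  induction d as [|d IH].
  - rewrite Nat.add_0_r, subrr, norm0. lra.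
  - rewrite Nat.add_succ_r. eapply Rle_trans. apply (norm_sub_le A _ (Ms (n + d))).
    pose proof (Ms_step (n + d)). simpl ((1/2)^(S (n + d))) in *. lra.
Qed.

Lemma half_pow_le N n : (N <= n)%nat -> (1/2)^n <= (1/2)^N.
Proof. intro H. replace n with (N + (n - N))%nat by lia. apply half_pow_mono. Qed.
Lemma Ms_le n m : (n <= m)%nat -> norm (Ms m -' Ms n) <= (1/2)^n.
Proof.
  intro H. replace m with (n + (m - n))%nat by lia. pose proof (Ms_cauchy n (m - n)).
  pose proof (half_pow_bounds (n + (m - n))). lra.
Qed.

Lemma sq_exists : exists m, p *' m = m /\ m *' p = m /\ m^* *' (p -' k0) *' m = p.
Proof.
  destruct (complete Ms) as [l Hl].
  { intros eps Heps. destruct (half_pow_small eps Heps) as [N HN]. exists N.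
    intros m n Hm Hn. destruct (Nat.le_ge_cases n m) as [Hnm|Hnm].
    - pose proof (Ms_le n m Hnm). pose proof (half_pow_le N n Hn).
      fold (sub A (Ms m) (Ms n)). lra.
    - pose proof (Ms_le m n Hnm). pose proof (half_pow_le N m Hm).
      fold (sub A (Ms m) (Ms n)). rewrite norm_sub_sym. lra. }
  assert (Hpn : norm p <= 1) by (apply proj_norm; auto).
  destruct Pp as [Hpp Hps].
  assert (Lim : forall eps, 0 < eps -> exists n, norm (Ms n -' l) < eps /\ (1/2)^n < eps).
  { intros eps Heps. destruct (Hl eps Heps) as [N1 H1]. destruct (half_pow_small eps Heps) as [N2 H2].
    exists (N1 + N2)%nat. split. apply H1. lia.
    pose proof (half_pow_mono N2 N1). replace (N2 + N1)%nat with (N1 + N2)%nat in * by lia. lra. }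
  exists l. split; [|split].
  - apply norm_small_eq. intros eps Heps.
    destruct (Lim (eps/2)) as [n [Hn _]]; [lra|].
    destruct (inv_n n) as [_ [_ [_ [_ [IpM _]]]]].
    replace (p *' l -' l) with (p *' (l -' Ms n) +' (Ms n -' l)) by (rewrite mul_subr, IpM; agroup).
    eapply Rle_lt_trans. apply norm_add_le.
    pose proof (normM p (l -' Ms n)) as N1. rewrite (norm_sub_sym A l) in N1.
    pose proof (norm_ge0 (Ms n -' l)). nra.
  - apply norm_small_eq. intros eps Heps.
    destruct (Lim (eps/2)) as [n [Hn _]]; [lra|].
    destruct (inv_n n) as [_ [_ [_ [_ [_ [IMp _]]]]]].
    replace (l *' p -' l) with ((l -' Ms n) *' p +' (Ms n -' l)) by (rewrite mul_subl, IMp; agroup).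
    eapply Rle_lt_trans. apply norm_add_le.
    pose proof (normM (l -' Ms n) p) as N1. rewrite (norm_sub_sym A l) in N1.
    pose proof (norm_ge0 (Ms n -' l)). nra.
  - apply norm_small_eq. intros eps Heps.
    destruct (Lim (Rmin 1 (eps/20))) as [n [Hn Hu]].
    { apply Rmin_glb_lt; lra. }
    destruct (inv_n n) as [_ [_ [_ [Ikn [_ [_ [IMM IMn]]]]]]].
    pose proof (half_pow_bounds n).
    set (M := Ms n) in *. set (X := p -' k0) in *.
    assert (HX : norm X <= 5/4).
    { unfold X. eapply Rle_trans. apply norm_sub_le2. lra. }
    assert (HXl : norm (M -' l) < 1) by (pose proof (Rmin_l 1 (eps/20)); lra).
    assert (HXe : norm (M -' l) < eps/20) by (pose proof (Rmin_r 1 (eps/20)); lra).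
    assert (Hln : norm l <= 3).
    { replace l with (M -' (M -' l)) by agroup. eapply Rle_trans. apply norm_sub_le2. lra. }
    replace (l^* *' X *' l -' p) with
      ((l -' M)^* *' X *' l +' M^* *' X *' (l -' M) +' (M^* *' X *' M -' p)).
    2:{ sexpand. mexpand. agroup. }
    rewrite IMM.
    replace (p -' Ks n -' p) with (-' Ks n) by agroup.
    eapply Rle_lt_trans. apply norm_add_le. rewrite norm_opp.
    eapply Rle_lt_trans. apply Rplus_le_compat_r. apply norm_add_le.
    pose proof (norm3 ((l -' M)^*) X l). pose proof (norm3 (M^*) X (l -' M)).
    rewrite norm_star in *. rewrite (norm_sub_sym A l) in *.
    assert (0 <= norm X) by apply norm_ge0. assert (0 <= norm (M -' l)) by apply norm_ge0.
    assert (0 <= norm l) by apply norm_ge0. assert (0 <= norm M) by apply norm_ge0.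
    assert (norm (M -' l) * norm X * norm l <= (eps/20) * (5/4) * 3).
    { apply Rmult_le_compat; try nra; apply Rmult_le_compat; lra. }
    assert (norm M * norm X * norm (M -' l) <= 2 * (5/4) * (eps/20)).
    { apply Rmult_le_compat; try nra; apply Rmult_le_compat; lra. }
    assert (norm (Ks n) <= (1/2)^n) by nra.
    pose proof (Rmin_r 1 (eps/20)). lra.
Qed.
End SQ.

Lemma step_lemma p Y E : projection A p -> Y^* *' Y = p -> Y *' p = Y -> E *' p = E ->
  norm Y <= 1 -> norm E <= 1/16 ->
  exists m, p *' m = m /\ m *' p = m /\ ((Y +' E) *' m)^* *' ((Y +' E) *' m) = p.
Proof.
  intros Pp HYY HYp HEp HY HE.
  destruct Pp as [Hpp Hps].
  set (k := p -' (Y +' E)^* *' (Y +' E)).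
  assert (Hq : (Y +' E) *' p = Y +' E) by (rewrite mulDl, HYp, HEp; reflexivity).
  assert (Hq' : p *' (Y +' E)^* = (Y +' E)^*) by (rewrite <- Hps, <- starM, Hq; reflexivity).
  assert (Hks : k^* = k) by (unfold k; rewrite star_sub, starM, starK, Hps; reflexivity).
  assert (Hpk : p *' k = k) by (unfold k; rewrite mul_subr, Hpp, mulA, Hq'; reflexivity).
  assert (Hkp : k *' p = k) by (unfold k; rewrite mul_subl, Hpp, <- mulA, Hq; reflexivity).
  assert (Hkn : norm k <= 1/4).
  { assert (Ek : k = -' (Y^* *' E +' E^* *' Y +' E^* *' E)).
    { unfold k. sexpand. mexpand. rewrite HYY. agroup. }
    rewrite Ek, norm_opp.
    pose proof (normM (Y^*) E). pose proof (normM (E^*) Y). pose proof (normM (E^*) E).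
    rewrite norm_star in *. pose proof (norm_ge0 E). pose proof (norm_ge0 Y).
    pose proof (norm_triangle (Y^* *' E +' E^* *' Y) (E^* *' E)).
    pose proof (norm_triangle (Y^* *' E) (E^* *' Y)).
    assert (norm Y * norm E <= 1/16) by nra. assert (norm E * norm Y <= 1/16) by nra.
    assert (norm E * norm E <= 1/16) by nra. lra. }
  destruct (sq_exists p k (conj Hpp Hps) Hks Hpk Hkp Hkn) as [m [Hm1 [Hm2 Hm3]]].
  exists m. split; auto. split; auto.
  replace (p -' k) with ((Y +' E)^* *' (Y +' E)) in Hm3 by (unfold k; agroup).
  rewrite starM. rewrite <- Hm3. rewrite !mulA. reflexivity.
Qed.

Lemma norm_pi_le1 p Y : projection A p -> Y^* *' Y = p -> norm Y <= 1.
Proof.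
  intros Pp H. pose proof (norm_cstar Y) as E. rewrite H in E.
  pose proof (proj_norm A p Pp). pose proof (norm_ge0 Y). nra.
Qed.

Section Compare.
Variables (p r a b : A).
Hypotheses (Pp : projection A p) (Pr : projection A r) (Hpr : p *' r = 0')
  (Hab : norm (p -' a *' r *' b) < 1/2).

Let z := r *' b *' p.
Let c := p *' a *' r.
Definition Wt (t : R) := (1 - t) .* p +' t .* z.

Lemma Hrp : r *' p = 0'.
Proof.
  destruct Pp as [_ Sp]; destruct Pr as [_ Sr].
  rewrite <- Sp, <- Sr, <- starM, Hpr, star0. reflexivity.
Qed.

Lemma bb t x : 0 <= t <= 1 -> p *' x = x -> norm x <= 2 * (1 + norm c) * norm (Wt t *' x).
Proof.
  intros Ht Hx. destruct Pp as [Hpp Hps]. destruct Pr as [Hrr Hrs].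
  pose proof (rel_assoc _ _ _ Hpr) as Hpr'. pose proof (rel_assoc _ _ _ Hrp) as Hrp'.
  pose proof (rel_assoc _ _ _ Hpp) as Hpp'. pose proof (rel_assoc _ _ _ Hx) as Hx'.
  pose proof (rel_assoc _ _ _ Hrr) as Hrr'.
  assert (E : x = p *' (Wt t *' x) +' c *' (Wt t *' x) +' t .* ((p -' c *' z) *' x)).
  { unfold Wt, c, z. mexpand. rewrite ?Hpr', ?Hrp', ?Hpp', ?Hx', ?Hrr', ?Hpr, ?Hrp, ?Hx, ?Hpp.
    rewrite ?mulr0, ?mul0r, ?smulc0, ?smul_smul. agroup. }
  assert (Ecz : p -' c *' z = p *' (p -' a *' r *' b) *' p).
  { unfold c, z. mexpand. rewrite ?Hpp', ?Hrr', ?Hpp. reflexivity. }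
  assert (Hpn : norm p <= 1) by (apply proj_norm; split; auto).
  assert (N1 : norm ((p -' c *' z) *' x) <= (1/2) * norm x).
  { rewrite Ecz. eapply Rle_trans. apply normM. apply Rmult_le_compat_r. apply norm_ge0.
    eapply Rle_trans. apply norm3. pose proof (norm_ge0 p). pose proof (norm_ge0 (p -' a *' r *' b)).
    assert (norm p * norm (p -' a *' r *' b) <= 1 * (1/2)) by (apply Rmult_le_compat; lra).
    nra. }
  pose proof (normM p (Wt t *' x)). pose proof (normM c (Wt t *' x)).
  pose proof (norm_ge0 (Wt t *' x)). pose proof (norm_ge0 c). pose proof (norm_ge0 x).
  assert (N2 : norm x <= norm p * norm (Wt t *' x) + norm c * norm (Wt t *' x) + t * ((1/2) * norm x)).
  { rewrite E at 1. eapply Rle_trans. apply norm_add_le. rewrite norm_smul, Rabs_pos_eq by lra.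
    pose proof (norm_add_le (p *' (Wt t *' x)) (c *' (Wt t *' x))).
    assert (t * norm ((p -' c *' z) *' x) <= t * ((1/2) * norm x)) by (apply Rmult_le_compat_l; lra).
    lra. }
  assert (norm p * norm (Wt t *' x) <= 1 * norm (Wt t *' x)) by (apply Rmult_le_compat_r; lra).
  nra.
Qed.

Lemma Wt_step t d : Wt (t + d) = Wt t +' d .* (z -' p).
Proof. unfold Wt. agroup. Qed.

Lemma iter N : (0 < N)%nat -> 16 * (norm (z -' p) + 1) * (2 * (1 + norm c) + 1) <= INR N ->
  forall j, (j <= N)%nat -> exists g, p *' g = g /\ g *' p = g /\
    (Wt (INR j / INR N) *' g)^* *' (Wt (INR j / INR N) *' g) = p.
Proof.
  intros HN HNb. assert (HN' : 0 < INR N) by (apply lt_0_INR; auto).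
  destruct Pp as [Hpp Hps].
  induction j as [|j IH]; intro Hj.
  - exists p. split; auto. split; auto.
    replace (INR 0 / INR N) with 0 by (simpl; field; lra).
    unfold Wt. rewrite smul_0, add0r, Rminus_0_r, smul_1, starM, Hps, !Hpp. reflexivity.
  - destruct IH as [g [Hg1 [Hg2 Hg3]]]; [lia|].
    set (t := INR j / INR N) in *.
    assert (Ht : 0 <= t <= 1).
    { unfold t. split. unfold Rdiv. apply Rmult_le_pos. apply pos_INR. apply Rlt_le, Rinv_0_lt_compat; auto.
      apply (Rmult_le_reg_r (INR N)); auto. unfold Rdiv. rewrite Rmult_assoc, Rinv_l by lra.
      rewrite Rmult_1_r, Rmult_1_l. apply le_INR. lia. }
    set (Y := Wt t *' g). set (E := (1 / INR N) .* ((z -' p) *' g)).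
    assert (HY1 : norm Y <= 1) by (apply (norm_pi_le1 p Y); auto; split; auto).
    assert (Hgn : norm g <= 2 * (1 + norm c)).
    { pose proof (bb t g Ht Hg1). fold Y in H. pose proof (norm_ge0 c). nra. }
    assert (HE : norm E <= 1/16).
    { unfold E. rewrite norm_smul, Rabs_pos_eq.
      2:{ apply Rlt_le, Rdiv_lt_0_compat; lra. }
      pose proof (normM (z -' p) g). pose proof (norm_ge0 (z -' p)). pose proof (norm_ge0 g).
      pose proof (norm_ge0 c).
      assert (norm (z -' p) * norm g <= (norm (z -' p) + 1) * (2 * (1 + norm c) + 1))
        by (apply Rmult_le_compat; lra).
      apply (Rmult_le_reg_l (INR N)); auto. unfold Rdiv. rewrite Rmult_1_l, <- Rmult_assoc, Rinv_r by lra.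
      nra. }
    destruct (step_lemma p Y E (conj Hpp Hps) Hg3) as [m [Hm1 [Hm2 Hm3]]]; auto.
    { unfold Y. rewrite <- mulA, Hg2. reflexivity. }
    { unfold E. rewrite mul_smull, <- mulA, Hg2. reflexivity. }
    exists (g *' m). split; [rewrite mulA, Hg1; reflexivity|]. split; [rewrite <- mulA, Hm2; reflexivity|].
    replace (INR (S j) / INR N) with (t + 1 / INR N) by (unfold t; rewrite S_INR; field; lra).
    rewrite Wt_step.
    replace ((Wt t +' (1 / INR N) .* (z -' p)) *' (g *' m)) with ((Y +' E) *' m).
    exact Hm3.
    unfold Y, E. mexpand. reflexivity.
Qed.

Lemma Wt1 : Wt 1 = z.
Proof. unfold Wt. rewrite Rminus_diag, smul_0, add0, smul_1. reflexivity. Qed.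

Lemma compare_w : exists w, w^* *' w = p /\ r *' w = w.
Proof.
  destruct (INR_unbounded (16 * (norm (z -' p) + 1) * (2 * (1 + norm c) + 1))) as [N0 HN0].
  set (N := S N0).
  assert (HNb : 16 * (norm (z -' p) + 1) * (2 * (1 + norm c) + 1) <= INR N).
  { unfold N. rewrite S_INR. lra. }
  destruct (iter N (Nat.lt_0_succ N0) HNb N (le_n N)) as [g [_ [_ Hg]]].
  assert (HN' : 0 < INR N) by (apply lt_0_INR; unfold N; lia).
  replace (INR N / INR N) with 1 in Hg by (field; lra).
  rewrite Wt1 in Hg. exists (z *' g). split; auto.
  unfold z. destruct Pr as [Hrr _]. rewrite !mulA, Hrr. reflexivity.
Qed.

End Compare.

Lemma cont_eps (f : R -> R) t0 : continuity_pt f t0 ->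
  forall eps, 0 < eps -> exists d, 0 < d /\ forall t, Rabs (t - t0) < d -> Rabs (f t - f t0) < eps.
Proof.
  intros H eps He. destruct (H eps He) as [d [Hd Hf]]. exists d. split; auto.
  intros t Ht. destruct (Req_dec t0 t) as [E|E].
  - subst. rewrite Rminus_diag, Rabs_R0. exact He.
  - apply (Hf t). split. split. exact I. exact E. exact Ht.
Qed.
Lemma beta_cont t0 : 0 <= t0 <= 1 -> forall eps, 0 < eps -> exists d, 0 < d /\
  forall t, Rabs (t - t0) < d -> Rabs (sqrt (t * (1 - t)) - sqrt (t0 * (1 - t0))) < eps.
Proof.
  intros Ht. apply (cont_eps (fun t => sqrt (t * (1 - t)))).
  assert (C1 : continuity_pt (fun t => t * (1 - t)) t0) by reg.
  apply (continuity_pt_comp (fun t => t * (1 - t)) sqrt). exact C1.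
  apply continuity_pt_sqrt. nra.
Qed.

Ltac agroup_with tac :=
  match goal with
  | |- @eq (car ?A) ?L ?R =>
      match reify L (@nil (car A)) with (?tL, ?e1) =>
      match reify R e1 with (?tR, ?e2) =>
        change (geval A e2 tL = geval A e2 tR);
        apply gterm_eq; cbn [gnf ladd lscale lunit map eqpad allz];
        repeat split; tac
      end end
  end.

Section Rot.
Variables (P E s : A).
Hypotheses (PP : projection A P) (PE : projection A E) (HPE : P *' E = 0')
  (Hs1 : s^* *' s = P) (Hs2 : s *' s^* = E).

Definition Rt (t : R) := (1 - t) .* P +' sqrt (t * (1 - t)) .* (s +' s^*) +' t .* E.

Lemma rot_rels : s *' P = s /\ E *' s = s /\ s^* *' E = s^* /\ P *' s^* = s^* /\
  P *' s = 0' /\ E *' P = 0' /\ s *' s = 0' /\ s^* *' s^* = 0' /\ s *' E = 0' /\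
  E *' s^* = 0' /\ s^* *' P = 0'.
Proof.
  destruct PP as [Hpp Hps]. destruct PE as [Hee Hes].
  assert (A1 : s *' P = s) by (apply pi_right; auto; split; auto).
  assert (A2 : E *' s = s) by (apply pi_left; auto; split; auto).
  assert (A3 : s^* *' E = s^*) by (rewrite <- Hes, <- starM, A2; reflexivity).
  assert (A4 : P *' s^* = s^*) by (rewrite <- Hps, <- starM, A1; reflexivity).
  assert (A5 : P *' s = 0') by (rewrite <- A2, mulA, HPE, mul0r; reflexivity).
  assert (A6 : E *' P = 0') by (rewrite <- Hes, <- Hps, <- starM, HPE, star0; reflexivity).
  assert (A7 : s *' s = 0') by (rewrite <- A1 at 1; rewrite <- mulA, A5, mulr0; reflexivity).
  assert (A8 : s^* *' s^* = 0') by (rewrite <- starM, A7, star0; reflexivity).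
  assert (A9 : s *' E = 0') by (rewrite <- A1, <- mulA, HPE, mulr0; reflexivity).
  assert (A10 : E *' s^* = 0') by (rewrite <- Hes, <- starM, A9, star0; reflexivity).
  assert (A11 : s^* *' P = 0') by (rewrite <- Hps, <- starM, A5, star0; reflexivity).
  repeat split; auto.
Qed.

Lemma Rt_proj t : 0 <= t <= 1 -> projection A (Rt t).
Proof.
  intro Ht. destruct rot_rels as [A1 [A2 [A3 [A4 [A5 [A6 [A7 [A8 [A9 [A10 A11]]]]]]]]]].
  destruct PP as [Hpp Hps]. destruct PE as [Hee Hes].
  pose proof (sqrt_sqrt (t * (1 - t))) as Hb. assert (0 <= t * (1 - t)) by nra.
  specialize (Hb H). set (b := sqrt (t * (1 - t))) in *.
  split.
  - unfold Rt. fold b. mexpand.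
    rewrite ?A1, ?A2, ?A3, ?A4, ?A5, ?A6, ?A7, ?A8, ?A9, ?A10, ?A11, ?Hs1, ?Hs2, ?HPE, ?Hpp, ?Hee.
    rewrite ?smulc0, ?smul_smul.
    agroup_with nra.
  - unfold Rt. fold b. sexpand. rewrite Hps, Hes. agroup.
Qed.

Lemma Rt_cont t0 : 0 <= t0 <= 1 -> forall eps, 0 < eps -> exists delta, 0 < delta /\
  forall t, 0 <= t <= 1 -> Rabs (t - t0) < delta -> norm (sub A (Rt t) (Rt t0)) < eps.
Proof.
  intros Ht eps He.
  set (K := norm P + norm (s +' s^*) + norm E + 1).
  assert (HK : 1 <= K) by (unfold K; pose proof (norm_ge0 P); pose proof (norm_ge0 E);
    pose proof (norm_ge0 (s +' s^*)); lra).
  destruct (beta_cont t0 Ht (eps / (4 * K))) as [d1 [Hd1 Hb]].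
  { apply Rdiv_lt_0_compat; lra. }
  exists (Rmin d1 (eps / (4 * K))). split.
  { apply Rmin_glb_lt; auto. apply Rdiv_lt_0_compat; lra. }
  intros t Ht1 Htd.
  pose proof (Rmin_l d1 (eps / (4 * K))). pose proof (Rmin_r d1 (eps / (4 * K))).
  specialize (Hb t ltac:(lra)).
  set (db := sqrt (t * (1 - t)) - sqrt (t0 * (1 - t0))) in *.
  replace (sub A (Rt t) (Rt t0)) with ((t0 - t) .* P +' db .* (s +' s^*) +' (t - t0) .* E)
    by (unfold Rt, db; agroup).
  eapply Rle_lt_trans. apply norm_add_le.
  eapply Rle_lt_trans. apply Rplus_le_compat_r. apply norm_add_le.
  rewrite !norm_smul.
  assert (E1 : Rabs (t0 - t) = Rabs (t - t0)) by apply Rabs_minus_sym. rewrite E1.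
  pose proof (norm_ge0 P). pose proof (norm_ge0 E). pose proof (norm_ge0 (s +' s^*)).
  pose proof (Rabs_pos (t - t0)). pose proof (Rabs_pos db).
  assert (B : eps / (4 * K) * K = eps / 4) by (field; lra).
  assert (Rabs (t - t0) * norm P <= eps / (4 * K) * K) by (apply Rmult_le_compat; unfold K in *; lra).
  assert (Rabs db * norm (s +' s^*) <= eps / (4 * K) * K) by (apply Rmult_le_compat; unfold K in *; lra).
  assert (Rabs (t - t0) * norm E <= eps / (4 * K) * K) by (apply Rmult_le_compat; unfold K in *; lra).
  assert (Rabs (t - t0) * norm P + Rabs db * norm (s +' s^*) + Rabs (t - t0) * norm E
          <= eps / (4*K) * K * 3) by lra.
  rewrite B in *. lra.
Qed.
End Rot.

Lemma rot_homotopic P E s : projection A P -> projection A E -> P *' E = 0' ->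
  s^* *' s = P -> s *' s^* = E -> homotopic_proj A P E.
Proof.
  intros PP PE HPE H1 H2. exists (Rt P E s). split; [|split; [|split]].
  - apply Rt_proj; auto.
  - unfold Rt. replace (0 * (1 - 0)) with 0 by ring. rewrite sqrt_0, Rminus_0_r, !smul_0, smul_1, !add0r.
    reflexivity.
  - unfold Rt. replace (1 * (1 - 1)) with 0 by ring. rewrite sqrt_0, Rminus_diag, !smul_0, smul_1, !add0.
    reflexivity.
  - intros t Ht eps He. apply Rt_cont; auto.
Qed.

Lemma concat_homotopic p e q : homotopic_proj A p e -> homotopic_proj A e q -> homotopic_proj A p q.
Proof.
  intros [P1 [Pr1 [P10 [P11 Pc1]]]] [P2 [Pr2 [P20 [P21 Pc2]]]].
  exists (fun t => if Rle_dec t (1/2) then P1 (2 * t) else P2 (2 * t - 1)).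
  split; [|split; [|split]].
  - intros t Ht. destruct (Rle_dec t (1/2)). apply Pr1; lra. apply Pr2; lra.
  - destruct (Rle_dec 0 (1/2)); [|lra]. rewrite Rmult_0_r. exact P10.
  - destruct (Rle_dec 1 (1/2)); [lra|]. replace (2 * 1 - 1) with 1 by ring. exact P21.
  - intros t0 Ht0 eps He.
    destruct (Rtotal_order t0 (1/2)) as [Hlt|[Heq|Hgt]].
    + destruct (Pc1 (2 * t0) ltac:(lra) eps He) as [d [Hd Hc]].
      exists (Rmin (d/2) (1/2 - t0)). split. apply Rmin_glb_lt; lra.
      intros t Ht Htd. pose proof (Rmin_l (d/2) (1/2 - t0)). pose proof (Rmin_r (d/2) (1/2 - t0)).
      assert (t < 1/2) by (apply Rabs_def2 in Htd; lra).
      destruct (Rle_dec t (1/2)); [|lra]. destruct (Rle_dec t0 (1/2)); [|lra].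
      apply Hc. lra. replace (2 * t - 2 * t0) with (2 * (t - t0)) by ring.
      rewrite Rabs_mult, Rabs_pos_eq by lra. lra.
    + subst t0. destruct (Pc1 1 ltac:(lra) eps He) as [d1 [Hd1 Hc1]].
      destruct (Pc2 0 ltac:(lra) eps He) as [d2 [Hd2 Hc2]].
      exists (Rmin (d1/2) (d2/2)). split. apply Rmin_glb_lt; lra.
      intros t Ht Htd. pose proof (Rmin_l (d1/2) (d2/2)). pose proof (Rmin_r (d1/2) (d2/2)).
      apply Rabs_def2 in Htd.
      destruct (Rle_dec (1/2) (1/2)) as [_|]; [|lra]. replace (2 * (1/2)) with 1 by field.
      destruct (Rle_dec t (1/2)).
      * apply Hc1. lra. rewrite Rabs_left1 by lra. lra.
      * rewrite P11, <- P20. apply Hc2. lra. rewrite Rabs_pos_eq by lra. lra.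
    + destruct (Pc2 (2 * t0 - 1) ltac:(lra) eps He) as [d [Hd Hc]].
      exists (Rmin (d/2) (t0 - 1/2)). split. apply Rmin_glb_lt; lra.
      intros t Ht Htd. pose proof (Rmin_l (d/2) (t0 - 1/2)). pose proof (Rmin_r (d/2) (t0 - 1/2)).
      assert (t > 1/2) by (apply Rabs_def2 in Htd; lra).
      destruct (Rle_dec t (1/2)); [lra|]. destruct (Rle_dec t0 (1/2)); [lra|].
      apply Hc. lra. replace (2 * t - 1 - (2 * t0 - 1)) with (2 * (t - t0)) by ring.
      rewrite Rabs_mult, Rabs_pos_eq by lra. lra.
Qed.

Lemma subequiv p r : projection A p -> properly_infinite A r -> full A r -> p *' r = 0' ->
  exists w, w^* *' w = p /\ r *' w = w.
Proof.
  intros Pp Hr Hf Hpr. destruct (full_approx A r p Hr Hf (1/2)) as [a [b Hab]]; [lra|].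
  destruct Hr as [Pr _].
  exact (compare_w p r a b Pp Pr Hpr Hab).
Qed.

End Main.

Theorem proposition2p5 (A : CStarAlg) (p q r : A) :
  properly_infinite A p -> full A p ->
  properly_infinite A q -> full A q ->
  mvn A p q ->
  properly_infinite A r -> full A r ->
  mul p r = zero -> mul q r = zero ->
  homotopic_proj A p q.
Proof.
  intros [Pp _] _ [Pq _] _ [v [Hv1 Hv2]] Hr Hfr Hpr Hqr.
  destruct (subequiv A p r Pp Hr Hfr Hpr) as [w [Hw1 Hw2]].
  pose proof Hr as [[Hrr Hrs] _].
  set (e := mul w (star w)).
  assert (Hwp : mul w p = w) by (apply pi_right; auto).
  assert (Hvp : mul v p = v) by (apply pi_right; auto).
  assert (Pe : projection A e).
  { unfold e. split.
    - rewrite <- mulA, (mulA (star w)), Hw1, mulA, Hwp. reflexivity.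
    - rewrite starM, starK. reflexivity. }
  assert (Hpe : mul p e = zero).
  { unfold e. rewrite <- Hw2, !mulA, Hpr, !mul0r. reflexivity. }
  assert (Hqe : mul q e = zero).
  { unfold e. rewrite <- Hw2, !mulA, Hqr, !mul0r. reflexivity. }
  set (u := mul w (star v)).
  assert (Hu1 : mul (star u) u = q).
  { unfold u. rewrite starM, starK, <- mulA, (mulA (star w)), Hw1, mulA, Hvp. exact Hv2. }
  assert (Hu2 : mul u (star u) = e).
  { unfold u, e. rewrite starM, starK, <- mulA, (mulA (star v)), Hv1, mulA, Hwp. reflexivity. }
  assert (Heq : mul e q = zero).
  { destruct Pe as [_ Se]. destruct Pq as [_ Sq].
    rewrite <- Se, <- Sq, <- starM, Hqe, star0. reflexivity. }
  apply concat_homotopic with e.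
  - apply (rot_homotopic A p e w); auto.
  - apply (rot_homotopic A e q (star u)); auto. rewrite starK. exact Hu2.
    rewrite starK. exact Hu1.
Qed.
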